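(* Let $k',d',n'$ be positive integers with $k'<d'<n'/2$. For each positive integer $m$ set $k=k'm$, $d=d'm$, $n=n'm$, let $f_m=\mathrm{Sym}_{d,n}(x_1,\ldots,x_n)=\sum_{I\in\{0,1\}^n,\,|I|=d}x^I$, let $M_m$ be the matrix with rows indexed by $I\in\{0,1\}^n$ with $|I|=k$, columns indexed by $J\in\{0,1\}^n$ with $|J|=d-k$, and entries $1$ if $I,J$ have disjoint supports and $0$ otherwise, and let $B_m=M_m^TM_m$. Let $u_m=\dim\partial^{=k} f_m$ and $v_m=\mathrm{Tr}(B_m)^2/\mathrm{Tr}(B_m^2)$. Then $v_m/u_m\to 0$ as $m\to\infty$.
   Context: $x^I$ for $I\in\{0,1\}^n$ denotes the multilinear monomial $x_1^{I_1}\cdots x_n^{I_n}$, and $|I|=\sum_i I_i$. $\partial^{=k} f$ denotes the real linear span of all partial derivatives of $f$ of total order $k$. *)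

(* Defs.v *)
From HB Require Import structures.
From mathcomp Require Import all_boot all_order all_algebra.
From mathcomp Require Import reals.
From mathcomp Require Import mpoly.
Set Implicit Arguments. Unset Strict Implicit. Unset Printing Implicit Defensive.
Import Order.TTheory GRing.Theory Num.Theory.
Local Open Scope ring_scope.

(* Multilinear monomial x^I for I a subset of {0..n-1} (I <-> indicator in {0,1}^n). *)
Definition xI (R : realType) (n : nat) (I : {set 'I_n}) : {mpoly R[n]} :=
  \prod_(i in I) 'X_i.

Definition Sym (R : realType) (n d : nat) : {mpoly R[n]} :=
  \sum_(I : {set 'I_n} | (#|I| == d)%N) xI R I.

Definition in_partial_span (R : realType) (n k : nat) (f p : {mpoly R[n]}) : Prop :=
  exists c : 'X_{1..n < k.+1} -> R,
    p = \sum_(a : 'X_{1..n < k.+1} | (mdeg a == k)%N) c a *: f^`M[a].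

Definition lin_indep (R : realType) (n r : nat) (v : 'I_r -> {mpoly R[n]}) : Prop :=
  forall c : 'I_r -> R, \sum_(i < r) c i *: v i = 0 -> forall i, c i = 0.

Definition has_dim (R : realType) (n : nat) (W : {mpoly R[n]} -> Prop) (u : nat) : Prop :=
  (exists v : 'I_u -> {mpoly R[n]}, (forall i, W (v i)) /\ lin_indep v) /\
  (forall r (v : 'I_r -> {mpoly R[n]}), (forall i, W (v i)) -> lin_indep v -> (r <= u)%N).

Notation kset n k := {I : {set 'I_n} | (#|I| == k)%N}.

Definition Mmat (R : realType) (n k d : nat) : 'M[R]_(#|{: kset n k}|, #|{: kset n (d - k)}|) :=
  \matrix_(i, j) (if [disjoint val (enum_val (i : 'I_#|{: kset n k}|)) & val (enum_val (j : 'I_#|{: kset n (d - k)}|))] then 1 else 0).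

Definition Bmat (R : realType) (n k d : nat) := (Mmat R n k d)^T *m Mmat R n k d.

(* Main.v *)
Require Import Defs.
From HB Require Import structures.
From mathcomp Require Import all_boot all_order all_algebra.
From mathcomp Require Import reals.
From mathcomp Require Import mpoly.
From mathcomp Require Import ring zify.
Import Order.TTheory GRing.Theory Num.Theory.
Set Implicit Arguments. Unset Strict Implicit. Unset Printing Implicit Defensive.

Lemma base_ineq k N : 2 * (k + 1) <= N -> N ^ 2 * (k + 2) <= 4 * (k + 1) * (N - k) ^ 2.
Proof.
move=> h. have [t ->] : exists t, N = 2 * (k+1) + t by exists (N - 2*(k+1)); lia.
have -> : 2 * (k + 1) + t - k = k + 2 + t by lia.
rewrite !expnS !expn0; nia.
Qed.

Lemma step_ineq k Y N : 2 * (k + Y) <= N -> N ^ 2 * Y <= (k + Y) * (N - k) ^ 2.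
Proof.
move=> h. have [t ->] : exists t, N = 2 * (k+Y) + t by exists (N - 2*(k+Y)); lia.
have -> : 2 * (k + Y) + t - k = k + 2 * Y + t by lia.
rewrite !expnS !expn0; nia.
Qed.

Lemma ffact_ineq k y : forall N, 0 < y -> 2 * (k + y) <= N ->
  (N ^_ y) ^ 2 * y`! * (k + 2) <= 4 * (k + y) ^_ y * ((N - k) ^_ y) ^ 2.
Proof.
elim: y => [//|y IH] N _ hN.
case: y IH hN => [|y] IH hN.
  rewrite !ffactn1 (_ : 1`! = 1) // muln1; have := base_ineq hN; lia.
have IH' := IH N.-1 isT.
rewrite (ffactnS N y.+1) (ffactnS (N - k) y.+1) (ffactnS (k + y.+2) y.+1) factS.
have e1 : (N - k).-1 = N.-1 - k by lia.
rewrite e1 (_ : (k + y.+2).-1 = k + y.+1); last by lia.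
have H1 := IH' ltac:(lia).
have H2 := step_ineq (k:=k) (Y:=y.+2) (N:=N) hN.
rewrite (_ : k + y.+2 = (k + y.+1).+1) in H2 *; last by lia.
set A := N.-1 ^_ y.+1 in H1 *; set B := (N.-1 - k) ^_ y.+1 in H1 *.
set C := (k + y.+1) ^_ y.+1 in H1 *.
have : N ^ 2 * y.+2 * ((A ^ 2 * (y.+1)`! * (k + 2))) <=
   ((k + y.+1).+1 * (N - k) ^ 2) * (4 * C * B ^ 2) by apply: leq_mul.
rewrite !expnMn; move=> H; apply: (leq_trans _ (leq_trans H _)); apply: eq_leq; clearbody A B C; ring.
Qed.

Lemma binom_ineq k a n : 0 < a -> 2 * (k + a) <= n ->
  'C(n, a) ^ 2 * (k + 2) <= 4 * 'C(k + a, a) * 'C(n - k, a) ^ 2.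
Proof.
move=> ha hn; have := ffact_ineq (k:=k) (N:=n) ha hn.
rewrite -!bin_ffact.
have hf : 0 < a`! ^ 3 by rewrite expn_gt0 fact_gt0.
move=> H; rewrite -(leq_pmul2r hf); apply: (leq_trans _ (leq_trans H _)); apply: eq_leq; ring.
Qed.

Local Open Scope ring_scope.

Section Tr.
Variable R : realType.

Lemma sum_sig (T : finType) (P : pred T) (F : T -> R) :
  \sum_(x : {x : T | P x}) F (val x) = \sum_(t | P t) F t.
Proof.
rewrite [RHS](reindex_omap (val : {x : T | P x} -> T) insub); last first.
  by move=> i Pi; rewrite insubT.
by apply: eq_bigl=> -[i iA]/=; rewrite insubT ?iA /= eqxx.
Qed.

Lemma sum_enum (T : finType) (F : T -> R) :
  \sum_(i < #|{: T}|) F (enum_val i) = \sum_(x : T) F x.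
Proof. by rewrite -(big_enum_val (A := predT)). Qed.

Lemma card_kset n k : #|{: kset n k}| = 'C(n, k).
Proof.
rewrite card_sig; have := card_draws 'I_n k; rewrite card_ord => <-.
by apply: eq_card => A; rewrite !inE.
Qed.

Variables n k d : nat.

Lemma Mrow i : \sum_j Mmat R n k d i j = ('C(n - k, d - k))%:R.
Proof.
under eq_bigr do rewrite mxE.
set A := val (enum_val i).
have hA : #|A| = k by apply/eqP; exact: (valP (enum_val i)).
rewrite (sum_enum (fun x : kset n (d - k) => if [disjoint A & val x] then (1:R) else 0)).
rewrite (@sum_sig _ _ (fun J : {set 'I_n} => if [disjoint A & J] then (1:R) else 0)).
rewrite -big_mkcondr sumr_const.
congr (_%:R).
have hC : (n - k)%N = #|~: A| by rewrite -hA -[n in (n - _)%N](card_ord n) -(cardsC A) addKn.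
rewrite hC -cards_draws.
apply: eq_card => J; rewrite !inE andbC unfold_in /= disjoint_sym disjoints_subset.
by [].
Qed.


Lemma Mmul i j : Mmat R n k d i j * Mmat R n k d i j = Mmat R n k d i j.
Proof. by rewrite mxE; case: ifP => _; rewrite ?mulr1 ?mulr0. Qed.

Lemma Mge0 i j : 0 <= Mmat R n k d i j.
Proof. by rewrite mxE; case: ifP. Qed.

Lemma Bentry j j' : Bmat R n k d j j' = \sum_i Mmat R n k d i j * Mmat R n k d i j'.
Proof. by rewrite /Bmat mxE; apply: eq_bigr => i _; rewrite mxE. Qed.

Lemma trB : \tr (Bmat R n k d) = ('C(n, k) * 'C(n - k, d - k))%:R.
Proof.
rewrite /mxtrace; under eq_bigr do rewrite Bentry.
under eq_bigr do under eq_bigr do rewrite Mmul.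
rewrite exchange_big /=; under eq_bigr do rewrite Mrow.
by rewrite sumr_const card_ord card_kset natrM mulr_natl.
Qed.

Lemma sumB : \sum_j \sum_j' Bmat R n k d j j' = ('C(n, k) * 'C(n - k, d - k) ^ 2)%:R.
Proof.
under eq_bigr do under eq_bigr do rewrite Bentry.
under eq_bigr do rewrite exchange_big /=.
rewrite exchange_big /=.
under eq_bigr => i _.
  under eq_bigr do rewrite -mulr_sumr.
  rewrite -mulr_suml !Mrow.
  over.
by rewrite sumr_const card_ord card_kset /= natrM natrX expr2 [RHS]mulr_natl.
Qed.

Lemma trB2 : \tr (Bmat R n k d *m Bmat R n k d) =
  \sum_j \sum_j' (Bmat R n k d j j') ^+ 2.
Proof.
rewrite /mxtrace; apply: eq_bigr => j _; rewrite mxE; apply: eq_bigr => j' _.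
rewrite expr2; congr (_ * _); rewrite !Bentry; apply: eq_bigr => i _; exact: mulrC.
Qed.

End Tr.

Lemma CS (R : realType) (I : finType) (x : I -> R) :
  (\sum_i x i) ^+ 2 <= #|I|%:R * \sum_i x i ^+ 2.
Proof.
have H : 0 <= \sum_i \sum_j (x i - x j) ^+ 2 by apply: sumr_ge0 => i _; apply: sumr_ge0 => j _; exact: sqr_ge0.
set S := \sum_i x i; set S2 := \sum_i x i ^+ 2.
have E : \sum_i \sum_j (x i - x j) ^+ 2 = (#|I|%:R * S2 - S ^+ 2) *+ 2.
  have e1 : forall i, \sum_j (x i - x j) ^+ 2 =
      #|I|%:R * x i ^+ 2 + S2 - (x i * S) *+ 2.
    move=> i; under eq_bigr do rewrite sqrrB.
    rewrite big_split /= sumrB sumr_const sumrMnl -mulr_sumr -/S -/S2 -[#|xpredT|]/#|I|.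
    by rewrite mulr_natl addrAC.
  under eq_bigr do rewrite e1.
  rewrite sumrB big_split /= -mulr_sumr sumr_const sumrMnl -mulr_suml.
  rewrite -/S -/S2 -[#|xpredT|]/#|I| -[S2 *+ #|I|]mulr_natl expr2.
  by rewrite mulrnBl mulr2n.
by move: H; rewrite E pmulrn_lge0 // subr_ge0.
Qed.

Lemma v_bound (R : realType) n k d : (k <= d)%N -> (d <= n)%N ->
  (\tr (Bmat R n k d)) ^+ 2 / \tr (Bmat R n k d *m Bmat R n k d)
    <= ('C(n, d - k)%:R / 'C(n - k, d - k)%:R) ^+ 2.
Proof.
move=> hkd hdn.
have hC : (0 < 'C(n - k, d - k))%N by rewrite bin_gt0; lia.
have hK : (0 < 'C(n, k))%N by rewrite bin_gt0; lia.
have hNc : (0 < 'C(n, d - k))%N by rewrite bin_gt0; lia.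
have cs := CS (fun p : 'I_#|{: kset n (d - k)}| * 'I_#|{: kset n (d - k)}| =>
   Bmat R n k d p.1 p.2).
rewrite card_prod card_ord -(pair_big xpredT xpredT (fun i j => Bmat R n k d i j))
  -(pair_big xpredT xpredT (fun i j => Bmat R n k d i j ^+ 2)) /= in cs.
rewrite sumB -trB2 in cs.
rewrite trB.
set t := \tr _ in cs *.
rewrite card_kset in cs.
set Ck := 'C(n, k)%:R : R. set C := 'C(n - k, d - k)%:R : R.
set Nc := 'C(n, d - k)%:R : R.
have Ck0 : 0 < Ck by rewrite ltr0n.
have C0 : 0 < C by rewrite ltr0n.
have N0 : 0 < Nc by rewrite ltr0n.
rewrite natrM natrX -/Ck -/C in cs.
rewrite natrM -/Ck -/C.
rewrite natrM -/Nc in cs.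
have X0 : 0 < (Ck * C ^+ 2) ^+ 2 by rewrite exprn_gt0 // mulr_gt0 // exprn_gt0.
have t0 : 0 < t.
  have : 0 < Nc * Nc * t by apply: lt_le_trans cs.
  by rewrite pmulr_rgt0 // mulr_gt0.
rewrite ler_pdivrMr //.
apply: (@le_trans _ _ ((Nc / C) ^+ 2 * ((Ck * C ^+ 2) ^+ 2 / (Nc * Nc)))).
  rewrite le_eqVlt; apply/orP; left; apply/eqP; field; rewrite !gt_eqF //.
apply: ler_wpM2l; first exact: sqr_ge0.
by rewrite ler_pdivrMr ?mulr_gt0 // [t * _]mulrC.
Qed.

Section Poly.
Variable R : realType.
Variable n : nat.

Definition mon (S : {set 'I_n}) : 'X_{1..n} := (\sum_(i in S) U_(i))%MM.

Lemma monE S i : mon S i = (i \in S).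
Proof.
rewrite /mon mnm_sumE.
case: (boolP (i \in S)) => hi.
  rewrite (bigD1 i) //= mnm1E eqxx big1 // => j /andP[_ hj].
  by rewrite mnm1E (negbTE hj).
by rewrite big1 // => j hj; rewrite mnm1E; case: eqP => // e; rewrite -e hj in hi.
Qed.

Lemma mon_inj : injective mon.
Proof.
move=> S T h; apply/setP => i; have := congr1 (fun m : 'X_{1..n} => m i) h.
by rewrite /= !monE; case: (i \in S); case: (i \in T).
Qed.

Lemma mdeg_mon S : mdeg (mon S) = #|S|.
Proof.
rewrite mdegE -sum1_card [RHS]big_mkcond /=; apply: eq_bigr => i _.
by rewrite monE; case: (i \in S).
Qed.

Lemma xI_mon S : xI R S = 'X_[mon S].
Proof.
by rewrite /xI /mon (big_morph _ (@mpolyXD n R) (@mpolyX0 n R)).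
Qed.

Lemma deriv_mon I A :
  ('X_[mon I] : {mpoly R[n]})^`M[mon A] =
    if A \subset I then 'X_[mon (I :\: A)] else 0.
Proof.
rewrite mderivmX; case: (boolP (A \subset I)) => hAI.
  have -> : (\prod_(i < n) (mon I i) ^_ (mon A i))%N = 1%N.
    apply: big1 => i _; rewrite !monE.
    case: (boolP (i \in A)) => hiA; last by rewrite ffactn0.
    by rewrite (subsetP hAI _ hiA).
  rewrite scale1r; congr 'X_[_]; apply/mnmP => i.
  rewrite mnmBE !monE !inE.
  by case: (boolP (i \in A)) => hiA; case: (boolP (i \in I)) => hiI //; 
    move: (subsetP hAI _ hiA); rewrite (negbTE hiI).
have [i hiA hiI] : exists2 i, i \in A & i \notin I.
  by move/subsetPn: hAI => [i h1 h2]; exists i.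
rewrite (bigD1 i) //= !monE hiA (negbTE hiI) /= .
by rewrite ffact0n // mul0n scale0r.
Qed.

Lemma coef_deriv_Sym d A m :
  ((Sym R n d)^`M[mon A])@_m =
    \sum_(I : {set 'I_n} | #|I| == d) ((A \subset I) && (mon (I :\: A) == m))%:R.
Proof.
rewrite /Sym raddf_sum raddf_sum /=; apply: eq_bigr => I _.
rewrite xI_mon deriv_mon; case: (A \subset I) => /=.
  by rewrite mcoeffX.
by rewrite mcoeff0.
Qed.


Lemma key (A A0 I X : {set 'I_n}) : A \subset X -> A0 \subset X -> #|A| = #|A0| ->
  A \subset I -> I :\: A = X :\: A0 -> A = A0 /\ I = X.
Proof.
move=> hAX hA0X hc hAI hE.
have hAA0 : A \subset A0.
  apply/subsetP => x hx; apply/negPn/negP => hx0.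
  have : x \in X :\: A0 by rewrite inE hx0 (subsetP hAX).
  by rewrite -hE inE hx.
have eA : A = A0 by apply/eqP; rewrite eqEcard hAA0 hc leqnn.
subst A; split => //; apply/setP => x.
case: (boolP (x \in A0)) => hx.
  by rewrite (subsetP hAI _ hx) (subsetP hA0X _ hx).
have := congr1 (fun S : {set 'I_n} => x \in S) hE; rewrite /= !inE hx /=.
by [].
Qed.

Lemma key_sum d (A A0 X : {set 'I_n}) : A \subset X -> A0 \subset X -> #|A| = #|A0| ->
  #|X| = d ->
  \sum_(I : {set 'I_n} | #|I| == d) ((A \subset I) && (mon (I :\: A) == mon (X :\: A0)))%:R
    = (A == A0)%:R :> R.
Proof.
move=> hAX hA0X hc hX.
have hterm : forall I : {set 'I_n}, ((A \subset I) && (mon (I :\: A) == mon (X :\: A0))) ->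
    A = A0 /\ I = X.
  move=> I /andP[hAI /eqP /mon_inj hE]; exact: key hAX hA0X hc hAI hE.
case: (eqVneq A A0) => [eA|neA].
  subst A0; rewrite (bigD1 X) /=; last by rewrite hX.
  rewrite hAX eqxx /= big1 ?addr0 // => I /andP[_ hI].
  case: (boolP ((A \subset I) && (mon (I :\: A) == mon (X :\: A)))) => // h.
  by case: (hterm I h) => _ eI; rewrite eI eqxx in hI.
rewrite big1 // => I _.
case: (boolP ((A \subset I) && (mon (I :\: A) == mon (X :\: A0)))) => // h.
by case: (hterm I h) => eA _; rewrite eA eqxx in neA.
Qed.

Lemma u_lower k d u : (d <= n)%N ->
  has_dim (in_partial_span k (Sym R n d)) u -> ('C(d, k) <= u)%N.
Proof.
move=> hd [_ H].
pose X := [set widen_ord hd i | i : 'I_d].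
have hX : #|X| = d by rewrite card_imset ?card_ord //; by move=> i j /(congr1 val) /= /val_inj.
pose P := [set A : {set 'I_n} | A \subset X & #|A| == k].
have hP : #|P| = 'C(d, k) by rewrite cards_draws hX.
rewrite -hP.
apply: (H #|P| (fun i => (Sym R n d)^`M[mon (enum_val i)])).
  move=> i; have : enum_val i \in P by exact: enum_valP.
  rewrite inE => /andP[_ /eqP hA].
  have hb : (mdeg (mon (enum_val i)) < k.+1)%N by rewrite mdeg_mon hA.
  exists (fun a : 'X_{1..n < k.+1} => ((a : 'X_{1..n}) == mon (enum_val i))%:R).
  rewrite (bigD1 (BMultinom hb)) /=; last by rewrite mdeg_mon hA.
  rewrite eqxx scale1r big1 ?addr0 // => a /andP[_ ha].
  have : (a : 'X_{1..n}) != mon (enum_val i).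
    by apply: contra ha => /eqP e; apply/eqP/val_inj.
  by move/negbTE => ->; rewrite scale0r.
move=> c hc i0.
have := congr1 (mcoeff (mon (X :\: enum_val i0))) hc.
rewrite mcoeff0 raddf_sum /=.
have hPi : forall i : 'I_#|P|, enum_val i \subset X /\ #|enum_val i| = k.
  by move=> i; have := enum_valP i; rewrite inE => /andP[? /eqP ?].
under eq_bigr => i _.
  rewrite mcoeffZ coef_deriv_Sym.
  have [h1 h2] := hPi i; have [h3 h4] := hPi i0.
  rewrite (key_sum h1 h3 _ hX); last by rewrite h2 h4.
  rewrite (inj_eq enum_val_inj).
  over.
rewrite (bigD1 i0) //= eqxx mulr1 big1 ?addr0 // => i hi.
by rewrite (negbTE hi) mulr0.
Qed.
End Poly.

Theorem proposition2 (R : realType) (k' d' n' : nat) :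
  (0 < k')%N -> (0 < d')%N -> (0 < n')%N -> (k' < d')%N -> (2 * d' < n')%N ->
  forall u : nat -> nat,
    (forall m, (0 < m)%N ->
       has_dim (in_partial_span (k' * m) (Sym R (n' * m) (d' * m))) (u m)) ->
  let v := fun m : nat =>
    (\tr (Bmat R (n' * m) (k' * m) (d' * m))) ^+ 2 /
    \tr (Bmat R (n' * m) (k' * m) (d' * m) *m Bmat R (n' * m) (k' * m) (d' * m)) in
  forall eps : R, 0 < eps ->
    exists N : nat, forall m, (N <= m)%N -> `| v m / (u m)%:R | < eps.
Proof.
move=> hk hd hn hkd hdn u hu v eps heps.
have hb0 : 0 <= 4 / eps by rewrite divr_ge0 // ltW.
have hN0 := archi_boundP hb0.
exists (Num.Def.archi_bound (4 / eps)).+1 => m hm.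
have m0 : (0 < m)%N by lia.
set k := (k' * m)%N; set d := (d' * m)%N; set n := (n' * m)%N.
have hkd' : (k <= d)%N by rewrite /k /d; nia.
have hdn' : (d <= n)%N by rewrite /d /n; nia.
have hkm : (m <= k)%N by rewrite /k; nia.
have ha : (0 < d - k)%N by rewrite /k /d; nia.
have h2 : (2 * (k + (d - k)) <= n)%N by rewrite /k /d /n; nia.
have hU := u_lower hdn' (hu m m0).
have hV := v_bound R hkd' hdn'.
have hB := binom_ineq ha h2.
rewrite (_ : (k + (d - k))%N = d) in hB; last by lia.
rewrite -(bin_sub hkd') in hU.
rewrite /v -/k -/d -/n.
have Tq0 : 0 <= \tr (Bmat R n k d *m Bmat R n k d).
  by rewrite trB2; apply: sumr_ge0 => j _; apply: sumr_ge0 => j' _; exact: sqr_ge0.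
set x := \tr (Bmat R n k d) ^+ 2 / _.
have x0 : 0 <= x by rewrite divr_ge0 ?sqr_ge0.
have hCd : (0 < 'C(d, d - k))%N by rewrite bin_gt0; lia.
have hCnk : (0 < 'C(n - k, d - k))%N by rewrite bin_gt0; lia.
set Cn := 'C(n, d - k)%:R : R. set Cnk := 'C(n - k, d - k)%:R : R.
set Cd := 'C(d, d - k)%:R : R. set U := (u m)%:R : R. set K := (k + 2)%:R : R.
have hB' : Cn ^+ 2 * K <= 4 * Cd * Cnk ^+ 2.
  by move: hB; rewrite -(ler_nat R) !natrM -!expr2 -/Cn -/Cnk -/Cd -/K.
have hU' : Cd <= U by rewrite ler_nat.
have Cnk0 : 0 < Cnk by rewrite ltr0n.
have Cd0 : 0 < Cd by rewrite ltr0n.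
have U0 : 0 < U by apply: lt_le_trans hU'.
have hV' : x * Cnk ^+ 2 <= Cn ^+ 2.
  by rewrite -ler_pdivlMr ?exprn_gt0 // -expr_div_n.
have heK : 4 < eps * K.
  have : 4 / eps < K.
    apply: lt_le_trans hN0 _; rewrite /K ler_nat; lia.
  by rewrite ltr_pdivrMr // mulrC.
rewrite ger0_norm; last by rewrite divr_ge0 // ltW.
rewrite ltr_pdivrMr //.
have K0 : 0 < K by rewrite ltr0n addn2.
have h3 : x * K * Cnk ^+ 2 <= 4 * Cd * Cnk ^+ 2.
  apply: le_trans hB'; rewrite mulrAC; apply: ler_wpM2r => //; exact: ltW.
have h4 : x * K <= 4 * Cd by rewrite -(ler_pM2r (exprn_gt0 2 Cnk0)).
have h5 : x * K < (eps * U) * K.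
  apply: (le_lt_trans h4); apply: (@le_lt_trans _ _ (4 * U)).
    by apply: ler_wpM2l.
  by rewrite mulrAC ltr_pM2r.
by rewrite ltr_pM2r in h5.
Qed.
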